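(* For every $n\ge 1$, the number $a_n$ of topologically distinct endstates of Planted Brussels Sprouts whose initial state has $n$ arms is \[a_n=\frac{1}{2n-1}\binom{3n-3}{n-1}.\]
   Context: Planted Brussels Sprouts of order $n$: start with a closed disk with $n$ marked points on its boundary circle, labeled $1,\dots,n$ in clockwise order. Attached to each marked point is an arm, a short segment pointing into the interior of the disk; these arms are free. A move consists of two steps. First, choose two free arms and join their free ends by a simple curve (an arc) in the disk that does not intersect any previously drawn arc or arm; the two joined arms cease to be free. Second, mark a point (a notch) on the arc, from which two new free arms emanate, one on each side of the arc. The game ends when no move is possible, and the final configuration is called an endstate. Long labels: the original arm at point $i$ has long label $i$. If an arc joins arms with long labels $\alpha$ and $\beta$, the two new arms receive long labels $(\alpha,\beta)$ and $(\beta,\alpha)$, placed so that, going clockwise around the notch, one sees the old arm $\alpha$, the new arm $(\alpha,\beta)$, the old arm $\beta$, and the new arm $(\beta,\alpha)$. Two endstates are topologically equivalent (counted once) iff some homeomorphism of the disk carries one to the other preserving long labels; equivalently, iff they have the same set of long labels. *)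

(* Defs.v *)
From HB Require Import structures.
From mathcomp Require Import all_boot all_order all_algebra.
From mathcomp Require Import finmap.
Set Implicit Arguments. Unset Strict Implicit. Unset Printing Implicit Defensive.

(* Long labels: original arm i is [Lf i]; the new arm (a,b) is [Nd a b]. *)
Inductive lab : Type := Lf of nat | Nd of lab & lab.

Fixpoint lab_enc (x : lab) : GenTree.tree nat :=
  match x with
  | Lf i => GenTree.Leaf i
  | Nd a b => GenTree.Node 0 [:: lab_enc a; lab_enc b]
  end.

Fixpoint lab_dec (t : GenTree.tree nat) : option lab :=
  match t with
  | GenTree.Leaf i => Some (Lf i)
  | GenTree.Node _ [:: ta; tb] =>
      match lab_dec ta, lab_dec tb with
      | Some a, Some b => Some (Nd a b)
      | _, _ => None
      end
  | _ => None
  end.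

Lemma lab_encK : pcancel lab_enc lab_dec.
Proof. by elim=> [i|a IHa b IHb] //=; rewrite IHa IHb. Qed.

HB.instance Definition _ := Countable.copy lab (pcan_type lab_encK).

(* A game state: the list of regions (faces) of the disk, each given by the
   cyclic sequence of its free arms, read along its boundary in the
   clockwise sense (region on the right); and the list [hist] of all long
   labels of all arms drawn so far (original and new). *)
Record state := State { regions : seq (seq lab); hist : seq lab }.

Definition init_state (n : nat) : state :=
  State [:: [seq Lf i | i <- iota 1 n]] [seq Lf i | i <- iota 1 n].

(* One move: in some region whose boundary reads cyclically
   a, A, b, B (a, b the two joined free arms), the arc from a to b splits
   the region into the part bounded by A and the arc, which receives the
   new arm (a,b), and the part bounded by B and the arc, which receives
   the new arm (b,a). *)
Inductive move : state -> state -> Prop :=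
| Move (pre post : seq (seq lab)) (r : seq lab) (i : nat)
       (a b : lab) (A B : seq lab) (h : seq lab) :
    rot i r = a :: A ++ b :: B ->
    move (State (pre ++ r :: post) h)
         (State (pre ++ (rcons A (Nd a b)) :: (rcons B (Nd b a)) :: post)
                [:: Nd a b, Nd b a & h]).

Inductive reachable (n : nat) : state -> Prop :=
| reach_init : reachable n (init_state n)
| reach_step s s' : reachable n s -> move s s' -> reachable n s'.

(* No move is possible iff every region has at most one free arm. *)
Definition is_endstate (s : state) : Prop :=
  forall st', ~ move s st'.

Local Open Scope fset_scope.

(* Topological class of an endstate = its set of long labels. *)
Definition labels (s : state) : {fset lab} := [fset x | x in hist s].

Definition endstate_classes (n : nat) (E : {fset {fset lab}}) : Prop :=
  forall S : {fset lab},
    S \in E <-> exists s, [/\ reachable n s, is_endstate s & labels s = S].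

(* Main.v *)
Require Import Defs.
From HB Require Import structures.
From mathcomp Require Import all_boot all_order all_algebra.
From mathcomp Require Import finmap.
From mathcomp Require Import zify ring.
Import GRing.Theory Num.Theory.
Set Implicit Arguments. Unset Strict Implicit. Unset Printing Implicit Defensive.

Local Open Scope fset_scope.

Definition fs (N : seq lab) : {fset lab} := [fset x | x in N].

Lemma in_fs x N : (x \in fs N) = (x \in N).
Proof. by rewrite /fs inE. Qed.

Lemma fs_cat M N : fs (M ++ N) = fs M `|` fs N.
Proof. by apply/fsetP=> z; rewrite inE !in_fs mem_cat. Qed.

Lemma fs_nil : fs [::] = fset0.
Proof. by apply/fsetP=> z; rewrite inE in_fs. Qed.

Ltac fset_solve := apply/fsetP => ?;
  rewrite ?(in_fsetU, in_fs, in_fset0, mem_cat, in_cons, in_nil, orbF, orFb);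
  repeat match goal with |- context [?x \in ?s] => case: (x \in s) end;
  repeat match goal with |- context [?x == ?y] => case: (x == y) end; done.

Lemma card_fs (s : seq {fset lab}) : uniq s -> #|` [fset x | x in s]| = size s.
Proof.
by move=> u; rewrite card_fseq undup_id.
Qed.

Inductive step : seq (seq lab) -> seq lab -> seq (seq lab) -> Prop :=
| Step pre post r i a b A B : rot i r = a :: A ++ b :: B ->
   step (pre ++ r :: post) [:: Nd a b; Nd b a]
        (pre ++ rcons A (Nd a b) :: rcons B (Nd b a) :: post).

Inductive mstar : seq (seq lab) -> seq lab -> seq (seq lab) -> Prop :=
| ms0 r : mstar r [::] r
| msS r N r' M r'' : step r N r' -> mstar r' M r'' -> mstar r (M ++ N) r''.

Lemma step_inv r N r' : step r N r' ->
  exists pre post x i a b A B, [/\ r = pre ++ x :: post, rot i x = a :: A ++ b :: B,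
     N = [:: Nd a b; Nd b a] & r' = pre ++ rcons A (Nd a b) :: rcons B (Nd b a) :: post].
Proof. by case=> pre post x i a b A B E; exists pre, post, x, i, a, b, A, B. Qed.

Lemma step_move r N r' h : step r N r' -> move (State r h) (State r' (N ++ h)).
Proof. case=> pre post x i a b A B E /=. exact: (@Move pre post x i a b A B h E). Qed.

Lemma mstar_reach n r N r' h : mstar r N r' ->
  reachable n (State r h) -> reachable n (State r' (N ++ h)).
Proof.
move=> H; elim: H h => [r0 h //|r0 N0 r1 M r2 st _ IH] h R.
rewrite -catA; apply: IH; exact: reach_step R (step_move _ st).
Qed.

Lemma mstar_snoc r N r' M r'' : mstar r N r' -> step r' M r'' -> mstar r (M ++ N) r''.
Proof.
elim=> [r0 st|r0 N0 r1 M0 r2 st0 _ IH st].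
  by rewrite cats0; exact: (msS st (ms0 r'')).
by rewrite catA; apply: msS st0 (IH st).
Qed.

Lemma mstar_trans r N r' M r'' : mstar r N r' -> mstar r' M r'' -> mstar r (M ++ N) r''.
Proof.
elim=> [r0 H|r0 N0 r1 M0 r2 st0 _ IH H]; first by rewrite cats0.
by rewrite catA; apply: msS st0 (IH H).
Qed.

Definition R0 n := [seq Lf i | i <- iota 1 n].

Lemma reach_mstar n s : reachable n s ->
  exists N, mstar [:: R0 n] N (regions s) /\ hist s = N ++ R0 n.
Proof.
elim=> [|s1 s2 _ [N [HN Hh]] Hm]; first by exists [::]; split=> //; exact: ms0.
case: Hm HN Hh => pre post r i a b A B h E /= HN Hh.
exists ([:: Nd a b; Nd b a] ++ N); split; last by rewrite Hh.
by apply: mstar_snoc HN _; apply: Step E.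
Qed.

Definition terminal (r : seq (seq lab)) := all (fun x => size x <= 1) r.

Lemma endstate_term s : is_endstate s <-> terminal (regions s).
Proof.
case: s => regs h /=; split.
  move=> H; apply/allP=> x xin; rewrite leqNgt; apply/negP=> big.
  case/splitPr: xin H => pre post H.
  move: big H; case: x => [|a [|b B]] // _ H.
  apply: (H (State (pre ++ rcons [::] (Nd a b) :: rcons B (Nd b a) :: post)
                   [:: Nd a b, Nd b a & h])).
  by apply: (@Move pre post [:: a, b & B] 0 a b [::] B h); rewrite rot0.
move=> T st' Hm; inversion Hm as [pre post r i a b A B h' E Hr Hs]; subst.
have rin : r \in pre ++ r :: post by rewrite mem_cat mem_head orbT.
have := allP T r rin; rewrite -(size_rot i) E /= size_cat /= addnS ltnS ltn0; done.
Qed.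

Definition Ends (r : seq (seq lab)) (L : {fset lab}) :=
  exists N r', [/\ mstar r N r', terminal r' & L = fs N].

Lemma Ends_eqL r L L' : Ends r L -> L = L' -> Ends r L'.
Proof. by move=> H <-. Qed.

Lemma E_term r : terminal r -> Ends r fset0.
Proof. by move=> T; exists [::], r; split=> //; [exact: ms0 | rewrite fs_nil]. Qed.

Lemma E_step r N r' L : step r N r' -> Ends r' L -> Ends r (fs N `|` L).
Proof.
move=> st [M [r'' [H T ->]]]; exists (M ++ N), r''; split => //.
  exact: msS st H.
by rewrite fs_cat fsetUC.
Qed.

Lemma step_frame p q r N r' : step r N r' -> step (p ++ r ++ q) N (p ++ r' ++ q).
Proof.
case=> pre post x i a b A B E.
have := Step (p ++ pre) (post ++ q) E.
by rewrite -!catA /=.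
Qed.

Lemma mstar_frame p q r N r' : mstar r N r' -> mstar (p ++ r ++ q) N (p ++ r' ++ q).
Proof.
elim=> [r0|r0 N0 r1 M r2 st _ IH]; first exact: ms0.
exact: msS (step_frame p q st) IH.
Qed.

Lemma terminal_cat r1 r2 : terminal (r1 ++ r2) = terminal r1 && terminal r2.
Proof. by rewrite /terminal all_cat. Qed.

Lemma E_cat r1 r2 L1 L2 : Ends r1 L1 -> Ends r2 L2 -> Ends (r1 ++ r2) (L1 `|` L2).
Proof.
move=> [N1 [r1' [H1 T1 ->]]] [N2 [r2' [H2 T2 ->]]].
exists (N2 ++ N1), (r1' ++ r2'); split.
- have A1 := mstar_frame [::] r2 H1.
  have A2 := mstar_frame r1' [::] H2.
  rewrite !cats0 /= in A1 A2.
  exact: mstar_trans A1 A2.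
- by rewrite terminal_cat T1 T2.
- by rewrite fs_cat fsetUC.
Qed.

Lemma cat_cons_split (T : Type) (pre : seq T) x post r1 r2 :
  pre ++ x :: post = r1 ++ r2 ->
  (exists y, r1 = pre ++ x :: y /\ post = y ++ r2) \/
  (exists z, pre = r1 ++ z /\ r2 = z ++ x :: post).
Proof.
elim: r1 pre => [|w r1 IH] pre /=; first by move=> <-; right; exists pre.
case: pre => [|p0 pre] /= [<-] E.
  by left; exists r1; rewrite E.
case: (IH _ E) => [[y [-> ->]]|[z [-> ->]]].
  by left; exists y.
by right; exists z.
Qed.

Lemma mstar_split r N r' : mstar r N r' -> terminal r' -> forall r1 r2, r = r1 ++ r2 ->
  exists N1 N2 r1' r2', [/\ mstar r1 N1 r1', mstar r2 N2 r2', terminal r1', terminal r2'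
                         & fs N = fs N1 `|` fs N2].
Proof.
elim=> [r0|r0 N0 r1 M r2 st _ IH] T p1 p2 E.
  exists [::], [::], p1, p2; split; try exact: ms0.
  - by move: T; rewrite E terminal_cat => /andP[].
  - by move: T; rewrite E terminal_cat => /andP[].
  - by rewrite !fs_nil fsetU0.
case/step_inv: st => pre [post [x [i [a [b [A [B [Er Ex EN Er1]]]]]]]].
rewrite EN; rewrite Er1 in IH; rewrite Er in E.
case: (cat_cons_split E) => [[y [Ep1 Epost]]|[z [Epre Ep2]]].
- have E' : pre ++ rcons A (Nd a b) :: rcons B (Nd b a) :: post =
            (pre ++ rcons A (Nd a b) :: rcons B (Nd b a) :: y) ++ p2
    by rewrite Epost -catA.
  have [N1 [N2 [q1 [q2 [H1 H2 T1 T2 EM]]]]] := IH T _ p2 E'.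
  exists (N1 ++ [:: Nd a b; Nd b a]), N2, q1, q2; split => //.
    by rewrite Ep1; apply: msS H1; apply: Step Ex.
  rewrite fs_cat EM fs_cat; fset_solve.
- have E' : pre ++ rcons A (Nd a b) :: rcons B (Nd b a) :: post =
            p1 ++ (z ++ rcons A (Nd a b) :: rcons B (Nd b a) :: post)
    by rewrite Epre -catA.
  have [N1 [N2 [q1 [q2 [H1 H2 T1 T2 EM]]]]] := IH T p1 _ E'.
  exists N1, (N2 ++ [:: Nd a b; Nd b a]), q1, q2; split => //.
    by rewrite Ep2; apply: msS H2; apply: Step Ex.
  rewrite fs_cat EM fs_cat; fset_solve.
Qed.

Lemma E_split r1 r2 L : Ends (r1 ++ r2) L ->
  exists L1 L2, [/\ Ends r1 L1, Ends r2 L2 & L = L1 `|` L2].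
Proof.
move=> [N [r' [H T ->]]].
have [N1 [N2 [q1 [q2 [H1 H2 T1 T2 EM]]]]] := mstar_split H T (erefl _).
by exists (fs N1), (fs N2); split=> //; [exists N1, q1 | exists N2, q2].
Qed.

Lemma rot_rot_ex (T : Type) (s : seq T) i j : exists k, rot k (rot j s) = rot i s.
Proof.
case: (leqP (size s) j) => Hj.
  by exists i; rewrite (rot_oversize Hj).
case: (leqP (size s) i) => Hi.
  exists (size s - j); rewrite (rot_oversize Hi).
  by have := rotK j s; rewrite /rotr size_rot.
case: (leqP j i) => Hji.
  exists (i - j)%N; rewrite rot_add_mod; try lia.
  by case: ifP => H; congr rot; lia.
exists (i + (size s - j))%N; rewrite rot_add_mod; try lia.
case: ifP => H; last by congr rot; lia.
have i0 : i = 0 by lia.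
by rewrite i0 add0n subnK ?rot_size ?rot0 //; lia.
Qed.

Lemma step_single_inv R N r' : step [:: R] N r' ->
  exists i a b A B, [/\ rot i R = a :: A ++ b :: B, N = [:: Nd a b; Nd b a]
     & r' = [:: rcons A (Nd a b); rcons B (Nd b a)]].
Proof.
case/step_inv=> pre [post [x [i [a [b [A [B [Er Ex EN Er1]]]]]]]].
case: pre Er Er1 => [|p0 pre] /= Er Er1; last by move: Er {Er1}; case: pre => [|? ?] [].
case: Er => -> Epost; rewrite -Epost in Er1.
by exists i, a, b, A, B.
Qed.

Lemma E_rot1 R j L : Ends [:: R] L -> Ends [:: rot j R] L.
Proof.
move=> [N [r' [H T ->]]].
inversion H as [r0 E1 E2 E3| r0 N0 r1 M r2 st H' E1 E2 E3]; subst.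
  exists [::], [:: rot j R]; split => //; first exact: ms0.
  by move: T; rewrite /terminal /= !andbT size_rot.
exists (M ++ N0), r'; split=> //.
case/step_single_inv: st => i [a [b [A [B [Ei EN Er1]]]]].
have [k Ek] := rot_rot_ex R i j.
apply: msS H'; rewrite EN Er1.
exact: (@Step [::] [::] (rot j R) k a b A B (etrans Ek Ei)).
Qed.

Lemma E_rotcat u v L : Ends [:: u ++ v] L -> Ends [:: v ++ u] L.
Proof. by move/(E_rot1 (size u)); rewrite rot_size_cat. Qed.

Lemma E_single_inv R L : Ends [:: R] L -> 1 < size R ->
  exists i a b A B L', [/\ rot i R = a :: A ++ b :: B,
    Ends [:: rcons A (Nd a b); rcons B (Nd b a)] L' & L = fs [:: Nd a b; Nd b a] `|` L'].
Proof.
move=> [N [r' [H T ->]]] big.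
inversion H as [r0 E1 E2 E3| r0 N0 r1 M r2 st H' E1 E2 E3]; subst.
  by move: T; rewrite /terminal /= andbT leqNgt big.
case/step_single_inv: st => i [a [b [A [B [Ei EN Er1]]]]]; subst.
exists i, a, b, A, B, (fs M); split => //.
  by exists M, r'.
by rewrite fs_cat fsetUC.
Qed.

Lemma E_single1 x L : Ends [:: [:: x]] L -> L = fset0.
Proof.
move=> [N [r' [H T ->]]].
inversion H as [r0 E1 E2 E3| r0 N0 r1 M r2 st H' E1 E2 E3]; subst.
  by rewrite fs_nil.
case/step_single_inv: st => i [a [b [A [B [Ei EN Er1]]]]].
by move: (f_equal size Ei); rewrite size_rot /= size_cat /= addnS.
Qed.


Inductive Full : seq lab -> {fset lab} -> lab -> Prop :=
| F1 x : Full [:: x] fset0 x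
| F2 Yc Mid Yd Lc c Ld d Lm ym : Full Yc Lc c -> Full Yd Ld d ->
    Full (rcons Mid (Nd c d)) Lm ym ->
    Full (Yc ++ Mid ++ Yd) (Lc `|` Ld `|` fs [:: Nd c d; Nd d c] `|` Lm) (Nd d c).

Lemma Full_eq R L y R' L' : Full R L y -> R = R' -> L = L' -> Full R' L' y.
Proof. by move=> H <- <-. Qed.

Lemma Full_sound Y L y : Full Y L y -> forall Ctx L', Ends [:: y :: Ctx] L' ->
  Ends [:: Y ++ Ctx] (L `|` L').
Proof.
elim=> [x|Yc Mid Yd Lc c Ld d Lm ym Hc IHc Hd IHd Hm IHm] Ctx L' HL'.
  by apply: Ends_eqL HL' _; rewrite fset0U.
have S3 : Ends [:: c :: Mid ++ d :: Ctx] (fs [:: Nd c d; Nd d c] `|` (Lm `|` L')).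
  apply: (E_step (r' := [:: rcons Mid (Nd c d); rcons Ctx (Nd d c)])).
    have := (@Step [::] [::] (c :: Mid ++ d :: Ctx) 0 c d Mid Ctx).
    by rewrite rot0 /=; apply.
  apply: (E_cat (r1 := [:: rcons Mid (Nd c d)]) (r2 := [:: rcons Ctx (Nd d c)])).
    have := IHm [::] fset0 (E_term _).
    by rewrite cats0 fsetU0; apply.
  rewrite -cats1; exact: (E_rotcat (u := [:: Nd d c])).
have S2 : Ends [:: d :: Ctx ++ c :: Mid] (fs [:: Nd c d; Nd d c] `|` (Lm `|` L')).
  exact: (E_rotcat (u := c :: Mid) S3).
have S1 := IHd _ _ S2.
have S0 : Ends [:: c :: Mid ++ Yd ++ Ctx] (Ld `|` (fs [:: Nd c d; Nd d c] `|` (Lm `|` L'))).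
  by move: S1; rewrite catA => /(E_rotcat (u := Yd ++ Ctx)).
have := IHc _ _ S0.
have -> : (Yc ++ Mid ++ Yd) ++ Ctx = Yc ++ (Mid ++ Yd ++ Ctx) by rewrite !catA.
move/Ends_eqL; apply; fset_solve.
Qed.

Lemma Full_sound0 Y L y : Full Y L y -> Ends [:: Y] L.
Proof.
move=> H; have := Full_sound H (E_term (r := [:: [:: y]]) _).
by rewrite cats0 fsetU0; apply.
Qed.

Lemma RL a b X2 L1 y1 : Full (rcons X2 (Nd a b)) L1 y1 ->
  forall R2 L2 y, Full R2 L2 y -> forall X1 X3, R2 = X1 ++ Nd b a :: X3 ->
  Full (X1 ++ a :: X2 ++ b :: X3) (L1 `|` L2 `|` fs [:: Nd a b; Nd b a]) y.
Proof.
move=> H1 R2 L2 y; elim=> {R2 L2 y} [x|Yc Mid Yd Lc c Ld d Lm ym Hc IHc Hd IHd Hm IHm] X1 X3 E.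
  case: X1 E => [|w X1] /= E; last by case: X1 E => [|? ?] [].
  case: E => -> E3; subst X3.
  apply: Full_eq (F2 (F1 a) (F1 b) H1) _ _ => //.
  fset_solve.
case: (cat_cons_split (esym E)) => [[y [Ep1 Epost]]|[z [Epre Ep2]]].
- have := F2 (IHc _ _ Ep1) Hd Hm.
  move/Full_eq; apply; first by rewrite Epost; repeat (rewrite -catA /=).
  fset_solve.
- case: (cat_cons_split (esym Ep2)) => [[y [Em Ex3]]|[z' [Ez Ed]]].
  + have E' : rcons Mid (Nd c d) = z ++ Nd b a :: rcons y (Nd c d).
      by rewrite Em rcons_cat.
    have Hm' : Full (rcons (z ++ a :: X2 ++ b :: y) (Nd c d))
                    (L1 `|` Lm `|` fs [:: Nd a b; Nd b a]) ym.
      by apply: Full_eq (IHm _ _ E') _ _ => //; rewrite rcons_cat /= rcons_cat.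
    have := F2 Hc Hd Hm'.
    move/Full_eq; apply; first by rewrite Epre Ex3; repeat (rewrite -catA /=).
    fset_solve.
  + have := F2 Hc (IHd _ _ Ed) Hm.
    move/Full_eq; apply; first by rewrite Epre Ez; repeat (rewrite -catA /=).
    fset_solve.
Qed.

Lemma complete k : forall R L, size R <= k -> 0 < size R -> Ends [:: R] L ->
  exists y, Full R L y.
Proof.
elim: k => [|k IH] R L Hk Hp HE; first by lia.
case: (ltnP 1 (size R)) => Hs.
  2: by case: R Hk Hp HE Hs => [|x [|x' R']] Hk Hp HE Hs //;
        rewrite (E_single1 HE); exists x; exact: F1.
have [i [a [b [A [B [L' [Ei HE' ->]]]]]]] := E_single_inv HE Hs.
have [L1 [L2 [H1 H2 ->]]] := E_split (r1 := [:: rcons A (Nd a b)])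
                                     (r2 := [:: rcons B (Nd b a)]) HE'.
have sz := f_equal size Ei; rewrite size_rot /= size_cat /= in sz.
have [U [V [ER EV]]] : exists U V, R = U ++ V /\ a :: A ++ b :: B = V ++ U.
  by exists (take i R), (drop i R); rewrite cat_take_drop -Ei.
have IH' : forall R2 L2, Ends [:: R2] L2 -> size R2 <= (size A + size B).+1 ->
    0 < size R2 -> exists y, Full R2 L2 y.
  by move=> R2 L3 HR2 s1 s2; apply: IH => //; lia.
have [y1 F1'] : exists y, Full (rcons A (Nd a b)) L1 y.
  by apply: (IH' _ _ H1); rewrite size_rcons; lia.
case: V EV ER => [|v V'] /= EV ER.
  rewrite cats0 in ER; rewrite ER -EV.
  have H2' : Ends [:: [:: Nd b a] ++ B] L2.
    by apply: E_rotcat; rewrite cats1.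
  have [y2 F2'] : exists y, Full ([:: Nd b a] ++ B) L2 y.
    by apply: (IH' _ _ H2'); rewrite /= ?size_cat /=; lia.
  exists y2; have := RL F1' F2' (X1 := [::]) (X3 := B) (erefl _).
  by move/Full_eq; apply => //; fset_solve.
case: EV => Ev EV; subst v.
case: (cat_cons_split EV) => [[y0 [EV' EB]]|[z [EA EU]]].
- subst V' B.
  have H2' : Ends [:: U ++ Nd b a :: y0] L2.
    move: H2; rewrite rcons_cat -cats1 => /(E_rotcat (u := y0)).
    by rewrite -catA.
  have [y2 F2'] : exists y, Full (U ++ Nd b a :: y0) L2 y.
    by apply: (IH' _ _ H2'); rewrite ?size_cat /= ?size_cat in sz *; lia.
  exists y2; have := RL F1' F2' (erefl _).
  move/Full_eq; apply; first by rewrite ER; repeat (rewrite -catA /=).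
  fset_solve.
- subst A U.
  have [y2 F2'] : exists y, Full (rcons B (Nd b a)) L2 y.
    by apply: (IH' _ _ H2); rewrite size_rcons; lia.
  have H1' : Ends [:: z ++ Nd a b :: V'] L1.
    move: H1; rewrite rcons_cat -cats1 => /(E_rotcat (u := V')).
    by rewrite -catA.
  have [y3 F3'] : exists y, Full (z ++ Nd a b :: V') L1 y.
    by apply: (IH' _ _ H1'); rewrite ?size_cat /= ?size_cat in sz *; lia.
  exists y3; have := RL F2' F3' (erefl _).
  move/Full_eq; apply; first by rewrite ER; repeat (rewrite -catA /=).
  fset_solve.
Qed.


Inductive tt := Lt | Nt of tt & tt & tt.

Fixpoint tt_enc (t : tt) : GenTree.tree nat :=
  match t with
  | Lt => GenTree.Leaf 0
  | Nt a b c => GenTree.Node 0 [:: tt_enc a; tt_enc b; tt_enc c]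
  end.

Fixpoint tt_dec (g : GenTree.tree nat) : option tt :=
  match g with
  | GenTree.Leaf _ => Some Lt
  | GenTree.Node _ [:: ga; gb; gc] =>
      match tt_dec ga, tt_dec gb, tt_dec gc with
      | Some a, Some b, Some c => Some (Nt a b c)
      | _, _, _ => None
      end
  | _ => None
  end.

Lemma tt_encK : pcancel tt_enc tt_dec.
Proof. by elim=> [|a IHa b IHb c IHc] //=; rewrite IHa IHb IHc. Qed.

HB.instance Definition _ := Countable.copy tt (pcan_type tt_encK).

Fixpoint tsz (t : tt) : nat :=
  match t with Lt => 0 | Nt a b c => (tsz a + tsz b + tsz c).+1 end.

Fixpoint eval (t : tt) (R : seq lab) : {fset lab} * lab :=
  match t with
  | Lt => (fset0, head (Lf 0) R)
  | Nt t1 t2 t3 =>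
    let ec := eval t1 (take (tsz t1).+1 R) in
    let ed := eval t3 (drop (tsz t2) (drop (tsz t1).+1 R)) in
    let em := eval t2 (rcons (take (tsz t2) (drop (tsz t1).+1 R)) (Nd ec.2 ed.2)) in
    (ec.1 `|` ed.1 `|` fs [:: Nd ec.2 ed.2; Nd ed.2 ec.2] `|` em.1, Nd ed.2 ec.2)
  end.

Lemma eval_Full t R : (tsz t).+1 = size R -> Full R (eval t R).1 (eval t R).2.
Proof.
elim: t R => [|t1 IH1 t2 IH2 t3 IH3] R /= HR.
  by case: R HR => [|x [|? ?]] //= _; exact: F1.
set Yc := take _ R; set Mid := take _ _; set Yd := drop _ _.
have ER : R = Yc ++ Mid ++ Yd by rewrite !cat_take_drop.
have H1 : Full Yc (eval t1 Yc).1 (eval t1 Yc).2.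
  by apply: IH1; rewrite size_take; case: ifP => //; lia.
have H3 : Full Yd (eval t3 Yd).1 (eval t3 Yd).2.
  by apply: IH3; rewrite /Yd !size_drop; lia.
have H2 := IH2 (rcons Mid (Nd (eval t1 Yc).2 (eval t3 Yd).2)).
have := F2 H1 H3 (H2 _).
rewrite -ER; apply; rewrite size_rcons /Mid size_take size_drop.
by case: ifP => //; lia.
Qed.

Lemma Full_eval R L y : Full R L y -> exists t, (tsz t).+1 = size R /\ eval t R = (L, y).
Proof.
elim=> [x|Yc Mid Yd Lc c Ld d Lm ym Hc [t1 [s1 e1]] Hd [t3 [s3 e3]] Hm [t2 [s2 e2]]].
  by exists Lt.
exists (Nt t1 t2 t3); split.
  by rewrite /= !size_cat; rewrite size_rcons in s2; lia.
rewrite size_rcons in s2; case: s1 s2 => s1 [s2].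
rewrite /= s1 s2 take_size_cat // drop_size_cat // take_size_cat // drop_size_cat //.
by rewrite e1 e3 /= e2.
Qed.


Fixpoint lv (x : lab) : seq nat :=
  match x with Lf i => [:: i] | Nd a b => lv a ++ lv b end.
Definition lvR (R : seq lab) : seq nat := flatten (map lv R).
Definition good (R : seq lab) := uniq (lvR R).
Definition sat (R : seq lab) (X : seq nat) :=
  {subset X <= lvR R} /\ forall r, r \in R -> has (mem X) (lv r) -> {subset lv r <= X}.

Lemma lv_ne x : exists i, i \in lv x.
Proof.
elim: x => [i|a [i Hi] b _]; first by exists i; rewrite inE.
by exists i; rewrite mem_cat Hi.
Qed.

Lemma lvR_cat P Q : lvR (P ++ Q) = lvR P ++ lvR Q.
Proof. by rewrite /lvR map_cat flatten_cat. Qed.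

Lemma lvR_rcons P x : lvR (rcons P x) = lvR P ++ lv x.
Proof. by rewrite -cats1 lvR_cat /lvR /= cats0. Qed.

Lemma lvR_cons x P : lvR (x :: P) = lv x ++ lvR P.
Proof. by []. Qed.

Lemma mem_lvR r R : r \in R -> {subset lv r <= lvR R}.
Proof. by move=> rR i ir; apply/flatten_mapP; exists r. Qed.

Lemma lvRP i R : reflect (exists2 r, r \in R & i \in lv r) (i \in lvR R).
Proof. exact: flatten_mapP. Qed.

Lemma good_cat P Q : good (P ++ Q) -> [/\ good P, good Q &
   forall i, i \in lvR P -> i \in lvR Q -> False].
Proof.
rewrite /good lvR_cat cat_uniq => /and3P[uP nh uQ]; split=> // i iP iQ.
by move/hasP: nh; apply; exists i.
Qed.

Lemma sat_infix P Y S X : good (P ++ Y ++ S) -> sat Y X -> sat (P ++ Y ++ S) X.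
Proof.
move=> g [sX sr]; have [gP gYS dP] := good_cat g; have [gY gS dY] := good_cat gYS.
split.
  by move=> i /sX iY; rewrite !lvR_cat !mem_cat iY orbT.
move=> r; rewrite !mem_cat => /or3P[rP|rY|rS] /hasP[i ir iX].
- exfalso; apply: (dP i); first exact: (mem_lvR rP ir).
  by rewrite lvR_cat mem_cat (sX _ iX).
- by apply: sr => //; apply/hasP; exists i.
- exfalso; apply: (dY i); first exact: sX.
  exact: (mem_lvR rS ir).
Qed.

Lemma sat_cat R X Z : sat R X -> sat R Z -> sat R (X ++ Z).
Proof.
move=> [sX rX] [sZ rZ]; split.
  by move=> i; rewrite mem_cat => /orP[/sX|/sZ].
move=> r rR /hasP[i ir iXZ]; have : i \in X ++ Z := iXZ.
rewrite mem_cat => /orP[iX|iZ] j jr; rewrite mem_cat.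
  by rewrite (rX r rR _ j jr) //; apply/hasP; exists i.
by rewrite (rZ r rR _ j jr) ?orbT //; apply/hasP; exists i.
Qed.

Lemma sat_single x : sat [:: x] (lv x).
Proof.
split; first by move=> i; rewrite lvR_cons /lvR /= cats0.
by move=> r; rewrite inE => /eqP -> _.
Qed.

Lemma sat_lift Yc Mid Yd c d X :
  good (Yc ++ Mid ++ Yd) -> sat (Yc ++ Mid ++ Yd) (lv c) -> sat (Yc ++ Mid ++ Yd) (lv d) ->
  {subset lv c <= lvR Yc} -> {subset lv d <= lvR Yd} ->
  sat (rcons Mid (Nd c d)) X -> sat (Yc ++ Mid ++ Yd) X.
Proof.
move=> g [_ rc] [_ rd] cY dY [sX rX].
have [gYc gMY dYc] := good_cat g; have [gM gYd dM] := good_cat gMY.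
have cdR : Nd c d \in rcons Mid (Nd c d) by rewrite mem_rcons mem_head.
split.
  move=> i /sX; rewrite lvR_rcons /= !mem_cat !lvR_cat !mem_cat => /or3P[->|/cY->|/dY->];
  by rewrite ?orbT.
move=> r rR /hasP[i ir iX].
have := sX _ iX; rewrite lvR_rcons /= !mem_cat => /or3P[iM|ic|id].
- have rM : r \in Mid.
    move: rR; rewrite !mem_cat => /or3P[rc'|//|rd'].
      by exfalso; apply: (dYc i (mem_lvR rc' ir)); rewrite lvR_cat mem_cat iM.
    by exfalso; apply: (dM i iM (mem_lvR rd' ir)).
  by apply: rX; [rewrite mem_rcons inE rM orbT | apply/hasP; exists i].
- have sub1 : {subset lv r <= lv c} by apply: rc => //; apply/hasP; exists i.
  have sub2 : {subset lv (Nd c d) <= X}.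
    by apply: rX cdR _; apply/hasP; exists i => //=; rewrite mem_cat ic.
  by move=> j /sub1 jc; apply: sub2; rewrite /= mem_cat jc.
- have sub1 : {subset lv r <= lv d} by apply: rd => //; apply/hasP; exists i.
  have sub2 : {subset lv (Nd c d) <= X}.
    by apply: rX cdR _; apply/hasP; exists i => //=; rewrite mem_cat id orbT.
  by move=> j /sub1 jd; apply: sub2; rewrite /= mem_cat jd orbT.
Qed.

Lemma good_rcons Yc Mid Yd c d :
  good (Yc ++ Mid ++ Yd) -> uniq (lv c) -> uniq (lv d) ->
  {subset lv c <= lvR Yc} -> {subset lv d <= lvR Yd} -> good (rcons Mid (Nd c d)).
Proof.
move=> g uc ud cY dY.
have [gYc gMY dYc] := good_cat g; have [gM gYd dM] := good_cat gMY.
have gM' : uniq (lvR Mid) := gM.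
rewrite /good lvR_rcons /= cat_uniq cat_uniq gM' uc ud /=.
rewrite andbT; apply/andP; split.
  apply/negP=> /hasP[i]; rewrite mem_cat => /orP[/cY ic|/dY id] iM.
    by apply: (dYc i ic); rewrite lvR_cat mem_cat iM.
  exact: (dM i iM id).
apply/negP=> /hasP[i /dY id /cY ic].
by apply: (dYc i ic); rewrite lvR_cat mem_cat id orbT.
Qed.

Lemma Nt_dec t1 t2 t3 R : (tsz (Nt t1 t2 t3)).+1 = size R ->
  exists Yc Mid Yd, [/\ R = Yc ++ Mid ++ Yd, (tsz t1).+1 = size Yc,
    tsz t2 = size Mid, (tsz t3).+1 = size Yd &
    eval (Nt t1 t2 t3) R =
     ((eval t1 Yc).1 `|` (eval t3 Yd).1 `|`
        fs [:: Nd (eval t1 Yc).2 (eval t3 Yd).2; Nd (eval t3 Yd).2 (eval t1 Yc).2] `|`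
        (eval t2 (rcons Mid (Nd (eval t1 Yc).2 (eval t3 Yd).2))).1,
      Nd (eval t3 Yd).2 (eval t1 Yc).2)].
Proof.
move=> /= HR.
exists (take (tsz t1).+1 R), (take (tsz t2) (drop (tsz t1).+1 R)),
       (drop (tsz t2) (drop (tsz t1).+1 R)); split => //.
- by rewrite !cat_take_drop.
- by rewrite size_take; case: ifP => //; lia.
- by rewrite size_take size_drop; case: ifP => //; lia.
- by rewrite !size_drop; lia.
Qed.

Lemma head_cat_ne (x : lab) P Q : 0 < size P -> head x (P ++ Q) = head x P.
Proof. by case: P. Qed.

Lemma last_cat_ne (x : lab) P Q : 0 < size Q -> last x (P ++ Q) = last x Q.
Proof. by case: Q => // q Q _; rewrite last_cat. Qed.

Definition disj (X Z : seq nat) := forall i, i \in X -> i \in Z -> False.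

Definition Linv R (L : {fset lab}) := forall l, l \in L ->
  exists u v, [/\ l = Nd u v, sat R (lv u), sat R (lv v) & disj (lv u) (lv v)].

Lemma inv t : forall R, good R -> (tsz t).+1 = size R ->
  [/\ sat R (lv (eval t R).2), {subset lv (head (Lf 0) R) <= lv (eval t R).2},
      {subset lv (last (Lf 0) R) <= lv (eval t R).2}, uniq (lv (eval t R).2)
    & Linv R (eval t R).1].
Proof.
elim: t => [|t1 IH1 t2 IH2 t3 IH3] R gR HR.
  case: R gR HR => [|x [|y R']] gR HR //=.
  split => //; first exact: sat_single.
  all: try by move: gR; rewrite /good /lvR /= cats0.
  all: try by move=> l; rewrite inE.
have [Yc [Mid [Yd [ER s1 s2 s3 ->]]]] := Nt_dec HR.
subst R => /=.
have [gYc gMY dYc] := good_cat gR; have [gM gYd dM] := good_cat gMY.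
have [sc hc lc uc Lc] := IH1 Yc gYc s1.
have [sd hd ld ud Ld] := IH3 Yd gYd s3.
set c := (eval t1 Yc).2 in sc hc lc uc Lc *.
set d := (eval t3 Yd).2 in sd hd ld ud Ld *.
have cY : {subset lv c <= lvR Yc} by case: sc.
have dY : {subset lv d <= lvR Yd} by case: sd.
have gR' : good (rcons Mid (Nd c d)) by apply: good_rcons gR uc ud cY dY.
have s2' : (tsz t2).+1 = size (rcons Mid (Nd c d)) by rewrite size_rcons s2.
have [_ _ _ _ Lm] := IH2 _ gR' s2'.
have scR : sat (Yc ++ Mid ++ Yd) (lv c) := @sat_infix [::] Yc (Mid ++ Yd) _ gR sc.
have sdR : sat (Yc ++ Mid ++ Yd) (lv d).
  by have := @sat_infix (Yc ++ Mid) Yd [::] (lv d); rewrite cats0 -catA; apply.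
have dcd : disj (lv c) (lv d).
  move=> i /cY ic /dY id; apply: (dYc i ic); by rewrite lvR_cat mem_cat id orbT.
split.
- exact: sat_cat.
- rewrite head_cat_ne -?s1 // => i /hc ic; by rewrite mem_cat ic orbT.
- rewrite !last_cat_ne -?s3 ?size_cat -?s3 ?addnS // => i /ld id; by rewrite mem_cat id.
- rewrite cat_uniq ud uc andbT /=; apply/negP => /hasP[i ic id].
  exact: (dcd i ic id).
- move=> l; rewrite !in_fsetU in_fs !inE => /orP[/orP[/orP[/Lc|/Ld]|/orP[/eqP->|/eqP->]]|/Lm].
  + move=> [u [v [-> su sv duv]]]; exists u, v; split => //.
      exact: (@sat_infix [::] Yc (Mid ++ Yd) _ gR su).
    exact: (@sat_infix [::] Yc (Mid ++ Yd) _ gR sv).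
  + move=> [u [v [-> su sv duv]]]; exists u, v; split => //.
      by have := @sat_infix (Yc ++ Mid) Yd [::] (lv u); rewrite cats0 -catA; apply.
    by have := @sat_infix (Yc ++ Mid) Yd [::] (lv v); rewrite cats0 -catA; apply.
  + by exists c, d; split.
  + by exists d, c; split => // i id ic; apply: (dcd i ic id).
  + move=> [u [v [-> su sv duv]]]; exists u, v; split => //.
      exact: (sat_lift gR scR sdR cY dY su).
    exact: (sat_lift gR scR sdR cY dY sv).
Qed.


Definition ctx t1 t2 t3 Yc Mid Yd :=
  [/\ good (Yc ++ Mid ++ Yd), (tsz t1).+1 = size Yc, tsz t2 = size Mid
    & (tsz t3).+1 = size Yd].

Lemma absorb R' u x : sat R' (lv u) -> x \in R' -> forall i, i \in lv u -> i \in lv x ->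
  {subset lv x <= lv u}.
Proof. by move=> [_ H] xR i iu ix; apply: H xR _; apply/hasP; exists i. Qed.

Lemma ctx_facts t1 t2 t3 Yc Mid Yd : ctx t1 t2 t3 Yc Mid Yd ->
  let c := (eval t1 Yc).2 in let d := (eval t3 Yd).2 in
  [/\ [/\ {subset lv c <= lvR Yc}, {subset lv (head (Lf 0) Yc) <= lv c},
          {subset lv (last (Lf 0) Yc) <= lv c} & Linv Yc (eval t1 Yc).1],
      [/\ {subset lv d <= lvR Yd}, {subset lv (head (Lf 0) Yd) <= lv d},
          {subset lv (last (Lf 0) Yd) <= lv d} & Linv Yd (eval t3 Yd).1],
      Linv (rcons Mid (Nd c d)) (eval t2 (rcons Mid (Nd c d))).1,
      [/\ forall i, i \in lvR Yc -> i \in lvR Mid -> False,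
          forall i, i \in lvR Yc -> i \in lvR Yd -> False &
          forall i, i \in lvR Mid -> i \in lvR Yd -> False] &
      0 < size Yc /\ 0 < size Yd].
Proof.
move=> [gR s1 s2 s3] c d.
have [gYc gMY dYc] := good_cat gR; have [gM gYd dM] := good_cat gMY.
have [[cY _] hc lc uc Lc] := inv gYc s1.
have [[dY _] hd ld ud Ld] := inv gYd s3.
have gR' : good (rcons Mid (Nd c d)) by apply: good_rcons gR uc ud cY dY.
have s2' : (tsz t2).+1 = size (rcons Mid (Nd c d)) by rewrite size_rcons s2.
have [_ _ _ _ Lm] := inv gR' s2'.
split => //; last by rewrite -s1 -s3.
split.
- by move=> i iY iM; apply: (dYc i iY); rewrite lvR_cat mem_cat iM.
- by move=> i iY iD; apply: (dYc i iY); rewrite lvR_cat mem_cat iD orbT.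
- exact: dM.
Qed.

Lemma notall_of (X Y : seq nat) x : {subset lv x <= Y} -> (forall i, i \in X -> i \in Y -> False) ->
  ~~ all (mem X) (lv x).
Proof.
move=> sub dis; apply/negP=> /allP H.
have [i ix] := lv_ne x; exact: (dis i (H _ ix) (sub _ ix)).
Qed.

Lemma ctx_parts t1 t2 t3 Yc Mid Yd : ctx t1 t2 t3 Yc Mid Yd ->
  let c := (eval t1 Yc).2 in let d := (eval t3 Yd).2 in
  let Lc := (eval t1 Yc).1 in let Ld := (eval t3 Yd).1 in
  let Lm := (eval t2 (rcons Mid (Nd c d))).1 in
  let P := fs [:: Nd c d; Nd d c] in
  [/\ forall z, z \in Lc -> all (mem (lvR Yc)) (lv z) && ~~ all (mem (lvR Yd)) (lv z),
      forall z, z \in Ld -> all (mem (lvR Yd)) (lv z) && ~~ all (mem (lvR Yc)) (lv z),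
      forall z, z \in P -> ~~ all (mem (lvR Yc)) (lv z) && ~~ all (mem (lvR Yd)) (lv z) &
      forall z, z \in Lm -> [&& ~~ all (mem (lvR Yc)) (lv z), ~~ all (mem (lvR Yd)) (lv z)
                               & z \notin P]].
Proof.
move=> H c d Lc Ld Lm P.
have [[cY hc lc Lci] [dY hd ld Ldi] Lmi [dCM dCD dMD] [ne1 ne2]] := ctx_facts H.
have cdR : Nd c d \in rcons Mid (Nd c d) by rewrite mem_rcons mem_head.
split.
- move=> z /Lci [u [v [-> [su _] [sv _] _]]]; apply/andP; split.
    by apply/allP=> i; rewrite /= mem_cat => /orP[/su|/sv].
  apply: (notall_of (Y := lvR Yc)); first by move=> i; rewrite /= mem_cat => /orP[/su|/sv].
  by move=> i iD iC; apply: (dCD i iC iD).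
- move=> z /Ldi [u [v [-> [su _] [sv _] _]]]; apply/andP; split.
    by apply/allP=> i; rewrite /= mem_cat => /orP[/su|/sv].
  apply: (notall_of (Y := lvR Yd)); first by move=> i; rewrite /= mem_cat => /orP[/su|/sv].
  exact: dCD.
- move=> z; rewrite in_fs !inE => /orP[] /eqP -> /=.
    apply/andP; split.
      apply/negP=> /allP H1; have [i id] := lv_ne d.
      by apply: (dCD i (H1 i _) (dY _ id)); rewrite mem_cat id orbT.
    apply/negP=> /allP H1; have [i ic] := lv_ne c.
    by apply: (dCD i (cY _ ic) (H1 i _)); rewrite mem_cat ic.
  apply/andP; split.
    apply/negP=> /allP H1; have [i id] := lv_ne d.
    by apply: (dCD i (H1 i _) (dY _ id)); rewrite mem_cat id.
  apply/negP=> /allP H1; have [i ic] := lv_ne c.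
  by apply: (dCD i (cY _ ic) (H1 i _)); rewrite mem_cat ic orbT.
- move=> z /Lmi [u [v [-> su sv duv]]].
  have [suR _] := su.
  have ab : forall i, i \in lv u -> i \in lv c ++ lv d -> {subset lv c ++ lv d <= lv u}.
    by move=> i iu icd; apply: (absorb su cdR iu).
  have [i iu] := lv_ne u.
  have iR := suR _ iu; rewrite lvR_rcons mem_cat /= in iR.
  apply/and3P; split.
  + apply/negP=> /allP H1.
    have iC : i \in lvR Yc by apply: H1; rewrite /= mem_cat iu.
    have ic : i \in lv c.
      case/orP: iR => [iM|]; first by case: (dCM i iC iM).
      rewrite mem_cat => /orP[//|/dY iD]; by case: (dCD i iC iD).
    have sub : {subset lv c ++ lv d <= lv u} by apply: (ab i iu); rewrite mem_cat ic.
    have [j jd] := lv_ne d.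
    have jC : j \in lvR Yc by apply: H1; rewrite /= mem_cat sub // mem_cat jd orbT.
    exact: (dCD j jC (dY _ jd)).
  + apply/negP=> /allP H1.
    have iD : i \in lvR Yd by apply: H1; rewrite /= mem_cat iu.
    have id : i \in lv d.
      case/orP: iR => [iM|]; first by case: (dMD i iM iD).
      rewrite mem_cat => /orP[/cY iC|//]; by case: (dCD i iC iD).
    have sub : {subset lv c ++ lv d <= lv u} by apply: (ab i iu); rewrite mem_cat id orbT.
    have [j jc] := lv_ne c.
    have jD : j \in lvR Yd by apply: H1; rewrite /= mem_cat sub // mem_cat jc.
    exact: (dCD j (cY _ jc) jD).
  + rewrite in_fs !inE; apply/negP => /orP[] /eqP [Eu Ev]; subst u v.
      have [j jc] := lv_ne c.
      have sub : {subset lv c ++ lv d <= lv c} by apply: (ab j jc); rewrite mem_cat jc.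
      have [k kd] := lv_ne d.
      have kin : k \in lv c ++ lv d by rewrite mem_cat kd orbT.
      exact: (duv k (sub k kin) kd).
    have [j jd] := lv_ne d.
    have sub : {subset lv c ++ lv d <= lv d} by apply: (ab j jd); rewrite mem_cat jd orbT.
    have [k kc] := lv_ne c.
    have kin : k \in lv c ++ lv d by rewrite mem_cat kc.
    exact: (duv k (sub k kin) kc).
Qed.

Lemma last_in (Y : seq lab) : 0 < size Y -> last (Lf 0) Y \in Y.
Proof. by case: Y => // y Y _ /=; exact: mem_last. Qed.

Lemma head_in (Y : seq lab) : 0 < size Y -> head (Lf 0) Y \in Y.
Proof. by case: Y => // y Y _; exact: mem_head. Qed.

Lemma ctx_shape t1 t2 t3 Yc Mid Yd : ctx t1 t2 t3 Yc Mid Yd ->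
  let c := (eval t1 Yc).2 in let d := (eval t3 Yd).2 in
  forall u v, Nd u v \in (eval t1 Yc).1 `|` (eval t3 Yd).1 `|` fs [:: Nd c d; Nd d c] `|`
                         (eval t2 (rcons Mid (Nd c d))).1 ->
  {subset lv (last (Lf 0) Yd) <= lv u} -> {subset lv (head (Lf 0) Yc) <= lv v} ->
  Nd u v = Nd d c.
Proof.
move=> H c d u v.
have [[cY hc lc Lci] [dY hd ld Ldi] Lmi [dCM dCD dMD] [ne1 ne2]] := ctx_facts H.
have [PLc PLd PP PLm] := ctx_parts H.
have cdR : Nd c d \in rcons Mid (Nd c d) by rewrite mem_rcons mem_head.
have [i il] := lv_ne (last (Lf 0) Yd).
have iD : i \in lvR Yd := mem_lvR (last_in ne2) il.
have [j jh] := lv_ne (head (Lf 0) Yc).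
have jC : j \in lvR Yc := mem_lvR (head_in ne1) jh.
rewrite !in_fsetU => /orP[/orP[/orP[zc|zd]|zP]|zm] Hu Hv.
- case/andP: (PLc _ zc) => /allP A _.
  have iu := Hu _ il.
  by case: (dCD i (A i _) iD); rewrite /= mem_cat iu.
- case/andP: (PLd _ zd) => /allP A _.
  have jv := Hv _ jh.
  by case: (dCD j jC (A j _)); rewrite /= mem_cat jv orbT.
- move: zP; rewrite in_fs !inE => /orP[] /eqP // [Eu Ev]; subst u v.
  by case: (dCD i (cY _ (Hu _ il)) iD).
- have [u' [v' [[Eu Ev] su sv duv]]] := Lmi _ zm; subst u' v'.
  have icd : i \in lv (Nd c d) by rewrite /= mem_cat (ld _ il) orbT.
  have jcd : j \in lv (Nd c d) by rewrite /= mem_cat (hc _ jh).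
  have S1 := absorb su cdR (Hu _ il) icd.
  have S2 := absorb sv cdR (Hv _ jh) jcd.
  by case: (duv i (S1 _ icd) (S2 _ icd)).
Qed.

Lemma Nt_ctx t1 t2 t3 R : good R -> (tsz (Nt t1 t2 t3)).+1 = size R ->
  exists Yc Mid Yd, [/\ R = Yc ++ Mid ++ Yd, ctx t1 t2 t3 Yc Mid Yd &
    eval (Nt t1 t2 t3) R =
     ((eval t1 Yc).1 `|` (eval t3 Yd).1 `|`
        fs [:: Nd (eval t1 Yc).2 (eval t3 Yd).2; Nd (eval t3 Yd).2 (eval t1 Yc).2] `|`
        (eval t2 (rcons Mid (Nd (eval t1 Yc).2 (eval t3 Yd).2))).1,
      Nd (eval t3 Yd).2 (eval t1 Yc).2)].
Proof.
move=> gR HR; have [Yc [Mid [Yd [ER s1 s2 s3 Ev]]]] := Nt_dec HR.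
by exists Yc, Mid, Yd; split => //; split => //; rewrite -ER.
Qed.

Lemma gap_unique t t' R : good R -> (tsz t).+1 = size R -> (tsz t').+1 = size R ->
  (eval t R).1 = (eval t' R).1 -> (eval t R).2 = (eval t' R).2.
Proof.
case: t => [|t1 t2 t3]; case: t' => [|t1' t2' t3'] gR s s' EL //; try by rewrite -s in s'.
have [Yc [Mid [Yd [ER H Ev]]]] := Nt_ctx gR s.
have [Yc' [Mid' [Yd' [ER' H' Ev']]]] := Nt_ctx gR s'.
move: EL; rewrite Ev Ev' /= => EL.
have [[cY hc lc Lci] [dY hd ld Ldi] _ _ [ne1 ne2]] := ctx_facts H'.
have yin : Nd (eval t3' Yd').2 (eval t1' Yc').2 \in
   (eval t1 Yc).1 `|` (eval t3 Yd).1 `|`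
        fs [:: Nd (eval t1 Yc).2 (eval t3 Yd).2; Nd (eval t3 Yd).2 (eval t1 Yc).2] `|`
        (eval t2 (rcons Mid (Nd (eval t1 Yc).2 (eval t3 Yd).2))).1.
  by rewrite EL !in_fsetU in_fs !inE eqxx !orbT.
have [[_ _ _ _] _ _ _ [n1 n2]] := ctx_facts H.
apply: esym; apply: (ctx_shape H yin).
  have -> : last (Lf 0) Yd = last (Lf 0) Yd'.
    by rewrite -(last_cat_ne _ (Yc ++ Mid) n2) -(last_cat_ne _ (Yc' ++ Mid') ne2) -!catA -ER -ER'.
  exact: ld.
have -> : head (Lf 0) Yc = head (Lf 0) Yc'.
  by rewrite -(head_cat_ne _ (Mid ++ Yd) n1) -(head_cat_ne _ (Mid' ++ Yd') ne1) -ER -ER'.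
exact: hc.
Qed.

Lemma cat_split_le (T : Type) (P1 Q1 P2 Q2 : seq T) : P1 ++ Q1 = P2 ++ Q2 ->
  size P1 <= size P2 -> exists W, P2 = P1 ++ W /\ Q1 = W ++ Q2.
Proof.
elim: P1 P2 => [|x P1 IH] P2 E H /=; first by exists P2.
case: P2 E H => [|y P2] //= [-> E] H.
have [W [-> ->]] := IH _ E H.
by exists W.
Qed.

Lemma cat_eq_size (T : Type) (P1 Q1 P2 Q2 : seq T) : P1 ++ Q1 = P2 ++ Q2 ->
  size P1 = size P2 -> P1 = P2 /\ Q1 = Q2.
Proof.
move=> E s; have [W [E1 E2]] := cat_split_le E (eq_leq s).
have : size W = 0 by move: s; rewrite E1 size_cat; lia.
by case: W E1 E2 => //= -> -> _; rewrite cats0.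
Qed.

Lemma prefix_unique P1 Q1 P2 Q2 (X : seq nat) : good (P1 ++ Q1) -> P1 ++ Q1 = P2 ++ Q2 ->
  0 < size P1 -> 0 < size P2 ->
  {subset X <= lvR P1} -> {subset lv (last (Lf 0) P1) <= X} ->
  {subset X <= lvR P2} -> {subset lv (last (Lf 0) P2) <= X} -> size P1 = size P2.
Proof.
wlog H : P1 Q1 P2 Q2 / size P1 <= size P2.
  move=> Hg g E n1 n2 a1 b1 a2 b2; case: (leqP (size P1) (size P2)) => h.
    exact: (Hg P1 Q1 P2 Q2).
  by apply: esym; apply: (Hg P2 Q2 P1 Q1) => //; [exact: ltnW | rewrite -E].
move=> g E n1 n2 a1 b1 a2 b2.
have [W [E1 E2]] := cat_split_le E H.
case: W E1 E2 => [|w W] E1 E2; first by rewrite E1 cats0.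
have [_ _ dis] := good_cat g.
have [i il] := lv_ne (last (Lf 0) P2).
have iP1 := a1 _ (b2 _ il).
have lW : last (Lf 0) P2 \in Q1.
  rewrite E1 last_cat_ne // E2 mem_cat; apply/orP; left; exact: last_in.
by case: (dis i iP1 (mem_lvR lW il)).
Qed.

Lemma suffix_unique P1 Q1 P2 Q2 (X : seq nat) : good (P1 ++ Q1) -> P1 ++ Q1 = P2 ++ Q2 ->
  0 < size Q1 -> 0 < size Q2 ->
  {subset X <= lvR Q1} -> {subset lv (head (Lf 0) Q1) <= X} ->
  {subset X <= lvR Q2} -> {subset lv (head (Lf 0) Q2) <= X} -> size Q1 = size Q2.
Proof.
wlog H : P1 Q1 P2 Q2 / size P1 <= size P2.
  move=> Hg g E n1 n2 a1 b1 a2 b2; case: (leqP (size P1) (size P2)) => h.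
    exact: (Hg P1 Q1 P2 Q2).
  by apply: esym; apply: (Hg P2 Q2 P1 Q1) => //; [exact: ltnW | rewrite -E].
move=> g E n1 n2 a1 b1 a2 b2.
have [W [E1 E2]] := cat_split_le E H.
case: W E1 E2 => [|w W] E1 E2; first by rewrite E2.
have g2 : good (P2 ++ Q2) by rewrite -E.
have [_ _ dis] := good_cat g2.
have [i il] := lv_ne (head (Lf 0) Q1).
have iQ2 := a2 _ (b1 _ il).
have hW : head (Lf 0) Q1 \in P2 by rewrite E2 E1 /= mem_cat inE eqxx orbT.
by case: (dis i (mem_lvR hW il) iQ2).
Qed.

Lemma part_eq (p : pred lab) (A B A' B' : {fset lab}) : A `|` B = A' `|` B' ->
  (forall z, z \in A -> p z) -> (forall z, z \in B -> ~~ p z) ->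
  (forall z, z \in A' -> p z) -> (forall z, z \in B' -> ~~ p z) -> A = A'.
Proof.
move=> E hA hB hA' hB'; apply/fsetP=> z; apply/idP/idP => zin.
  have : z \in A' `|` B' by rewrite -E in_fsetU zin.
  rewrite in_fsetU => /orP[//|/hB'/negP]; by have := hA _ zin.
have : z \in A `|` B by rewrite E in_fsetU zin.
rewrite in_fsetU => /orP[//|/hB/negP]; by have := hA' _ zin.
Qed.

Lemma eval_inj t : forall t' R, good R -> (tsz t).+1 = size R -> (tsz t').+1 = size R ->
  (eval t R).1 = (eval t' R).1 -> t = t'.
Proof.
elim: t => [|t1 IH1 t2 IH2 t3 IH3] [|t1' t2' t3'] R gR s s' EL //;
  try by rewrite -s in s'.
have EY := gap_unique gR s s' EL.
have [Yc [Mid [Yd [ER H Ev]]]] := Nt_ctx gR s.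
have [Yc' [Mid' [Yd' [ER' H' Ev']]]] := Nt_ctx gR s'.
rewrite Ev Ev' /= in EL EY; case: EY => Ed Ec.
have [[cY hc lc Lci] [dY hd ld Ldi] _ _ [n1 n2]] := ctx_facts H.
have [[cY' hc' lc' Lci'] [dY' hd' ld' Ldi'] _ _ [n1' n2']] := ctx_facts H'.
rewrite -Ec in cY' lc'; rewrite -Ed in dY' hd'.
have gR0 := gR; rewrite ER in gR0.
have E0 : Yc ++ (Mid ++ Yd) = Yc' ++ (Mid' ++ Yd') by rewrite -ER -ER'.
have sc : size Yc = size Yc' by apply: (prefix_unique gR0 E0 n1 n1' cY lc cY' lc').
have [EYc E1] := cat_eq_size E0 sc.
have [gYc gMY _] := good_cat gR0.
have sd : size Yd = size Yd' by apply: (suffix_unique gMY E1 n2 n2' dY hd dY' hd').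
have sm : size Mid = size Mid' by move: (f_equal size E1); rewrite !size_cat sd; lia.
have [EM EYd] := cat_eq_size E1 sm.
subst Yc' Mid' Yd'.
have [_ s1 s2 s3] := H; have [_ s1' s2' s3'] := H'.
have [PLc PLd PP PLm] := ctx_parts H.
have [PLc' PLd' PP' PLm'] := ctx_parts H'.
rewrite -Ec -Ed in PP' PLm' EL.
set c := (eval t1 Yc).2 in EL PP PLm PP' PLm' Ec.
set d := (eval t3 Yd).2 in EL PP PLm PP' PLm' Ed.
have e1 : (eval t1 Yc).1 = (eval t1' Yc).1.
  have EL1 := EL; rewrite -!fsetUA in EL1.
  apply: (part_eq (p := fun z => all (mem (lvR Yc)) (lv z)) EL1).
  - by move=> z /PLc /andP[].
  - move=> z; rewrite !in_fsetU => /orP[/PLd/andP[]//|/orP[/PP/andP[]//|/PLm/and3P[]//]].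
  - by move=> z /PLc' /andP[].
  - move=> z; rewrite !in_fsetU => /orP[/PLd'/andP[]//|/orP[/PP'/andP[]//|/PLm'/and3P[]//]].
have e3 : (eval t3 Yd).1 = (eval t3' Yd).1.
  have EL1 := EL; rewrite -!fsetUA fsetUCA [X in _ = X]fsetUCA in EL1.
  apply: (part_eq (p := fun z => all (mem (lvR Yd)) (lv z)) EL1).
  - by move=> z /PLd /andP[].
  - move=> z; rewrite !in_fsetU => /orP[/PLc/andP[]//|/orP[/PP/andP[]//|/PLm/and3P[]//]].
  - by move=> z /PLd' /andP[].
  - move=> z; rewrite !in_fsetU => /orP[/PLc'/andP[]//|/orP[/PP'/andP[]//|/PLm'/and3P[]//]].
have et1 : t1 = t1' by apply: (IH1 t1' Yc gYc s1 s1' e1).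
have gYd : good Yd by have [_ g3 _] := good_cat gMY.
have et3 : t3 = t3' by apply: (IH3 t3' Yd gYd s3 s3' e3).
subst t1' t3'.
have e2 : (eval t2 (rcons Mid (Nd c d))).1 = (eval t2' (rcons Mid (Nd c d))).1.
  have EL1 := EL; rewrite fsetUC [X in _ = X]fsetUC in EL1.
  set P := fs [:: Nd c d; Nd d c].
  apply: (part_eq (p := fun z => [&& ~~ all (mem (lvR Yc)) (lv z),
                                      ~~ all (mem (lvR Yd)) (lv z) & z \notin P]) EL1).
  - exact: PLm.
  - move=> z; rewrite !in_fsetU => /orP[/orP[/PLc/andP[h _]|/PLd/andP[h _]]|zP].
    + by rewrite h.
    + by rewrite h /= ?andbF.
    + by rewrite zP /= !andbF.
  - exact: PLm'.
  - move=> z; rewrite !in_fsetU => /orP[/orP[/PLc/andP[h _]|/PLd/andP[h _]]|zP].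
    + by rewrite h.
    + by rewrite h /= ?andbF.
    + by rewrite zP /= !andbF.
have gR' : good (rcons Mid (Nd c d)).
  have [[cY2 _] _ _ uc _] := inv gYc s1.
  have [[dY2 _] _ _ ud _] := inv gYd s3.
  exact: good_rcons gR0 uc ud cY2 dY2.
have s2r : (tsz t2).+1 = size (rcons Mid (Nd c d)) by rewrite size_rcons s2.
have s2r' : (tsz t2').+1 = size (rcons Mid (Nd c d)) by rewrite size_rcons s2'.
by rewrite (IH2 t2' _ gR' s2r s2r' e2).
Qed.

Local Close Scope fset_scope.

Definition comb3 (f : seq tt) : seq tt :=
  match f with a :: b :: c :: rest => Nt a b c :: rest | _ => f end.

Fixpoint enumF (fuel m r : nat) : seq (seq tt) :=
  match fuel with
  | 0 => [::]
  | fuel'.+1 =>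
    match r with
    | 0 => if m == 0 then [:: [::]] else [::]
    | r'.+1 => [seq Lt :: f | f <- enumF fuel' m r'] ++
               (match m with 0 => [::] | m'.+1 => [seq comb3 f | f <- enumF fuel' m' r'.+3] end)
    end
  end.

Definition fsz (f : seq tt) := sumn (map tsz f).

Lemma enumF_spec fuel : forall m r f, f \in enumF fuel m r -> size f = r /\ fsz f = m.
Proof.
elim: fuel => [|fuel IH] m [|r] f //=.
  by case: (m =P 0) => [->|//]; rewrite inE => /eqP ->.
rewrite mem_cat => /orP[/mapP[g /IH [s1 s2] ->]|]; first by rewrite /fsz /= -s1 -s2.
case: m => [//|m] /mapP[g /IH [s1 s2] ->].
case: g s1 s2 => [|a [|b [|c g]]] //= [s1] s2.
by rewrite /fsz /= -s1 -s2 /fsz /=; lia.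
Qed.

Lemma enumF_complete fuel : forall m r f, 3 * m + r < fuel -> size f = r -> fsz f = m ->
  f \in enumF fuel m r.
Proof.
elim: fuel => [|fuel IH] m r f //= Hf Hs Hz.
case: r Hf Hs => [|r] Hf Hs.
  by case: f Hs Hz => // _ <-; rewrite inE.
case: f Hs Hz => [//|t g] /= [Hs] Hz; rewrite mem_cat.
case: t Hz => [|a b c] Hz.
  apply/orP; left; apply/mapP; exists g => //; apply: IH => //; rewrite /fsz /= in Hz; lia.
rewrite /fsz /= in Hz.
case: m Hf Hz => [|m] Hf Hz; first by lia.
apply/orP; right; apply/mapP; exists [:: a, b, c & g] => //.
by apply: IH; rewrite /fsz //=; lia.
Qed.

Lemma enumF_uniq fuel : forall m r, uniq (enumF fuel m r).
Proof.
elim: fuel => [|fuel IH] m [|r] //=; try by case: (m == 0).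
rewrite cat_uniq; apply/and3P; split.
- by rewrite map_inj_uniq // => f g [].
- case: m => [|m] //; apply/negP => /hasP [x /mapP [g gin ->]] /mapP [h _].
  have [sg _] := enumF_spec gin.
  by case: g sg {gin} => [|? [|? [|? ?]]].
- case: m => [|m] //; rewrite map_inj_in_uniq // => f g.
  move=> /enumF_spec [s1 _] /enumF_spec [s2 _].
  case: f s1 => [|a [|b [|c f]]] //= _; case: g s2 => [|a' [|b' [|c' g]]] //= _.
  by case=> -> -> -> ->.
Qed.

Lemma enumF_size0 fuel : forall r, r < fuel -> size (enumF fuel 0 r) = 1.
Proof.
elim: fuel => [|fuel IH] [|r] //= H.
by rewrite cats0 size_map IH.
Qed.

Lemma enumF_size fuel : forall m r, 3 * m + r < fuel ->
  size (enumF fuel m r) * (3 * m + r) = r * 'C(3 * m + r, m).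
Proof.
elim: fuel => [|fuel IH] m r //= H.
case: r H => [|r] H.
  by case: m H => [|m] H //=; rewrite !muln0.
case: m H => [|m] H.
  by rewrite cats0 size_map enumF_size0 ?bin0; lia.
rewrite size_cat !size_map.
set A := size _; set B := size _.
have IA : A * (3 * m.+1 + r) = r * 'C(3 * m.+1 + r, m.+1) by apply: IH; lia.
have IB : B * (3 * m + r.+3) = r.+3 * 'C(3 * m + r.+3, m) by apply: IH; lia.
set N := 3 * m + r.+3.
have EN : 3 * m.+1 + r = N by rewrite /N; lia.
have EN1 : 3 * m.+1 + r.+1 = N.+1 by rewrite /N; lia.
rewrite EN in IA; rewrite EN1 binS.
set B1 := 'C(N, m.+1) in IA *; set B0 := 'C(N, m) in IB *.
have ML : m.+1 * B1 = (N - m) * B0 by rewrite /B1 /B0 mul_bin_left.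
have EK : N - m = 2 * m + r.+3 by rewrite /N; lia.
rewrite EK in ML.
have Npos : 0 < N * m.+1 by rewrite /N; lia.
apply/eqP; rewrite -(eqn_pmul2l Npos); apply/eqP.
transitivity (m.+1 * N.+1 * (A * N + B * N)); first by ring.
rewrite IA IB.
transitivity (N.+1 * (r * (m.+1 * B1) + r.+3 * m.+1 * B0)); first by ring.
rewrite ML.
transitivity (N * r.+1 * (m.+1 * B1 + m.+1 * B0)); last by ring.
rewrite ML /N; ring.
Qed.

Local Open Scope fset_scope.


Definition TL m := [seq head Lt f | f <- enumF (3 * m + 2) m 1].

Lemma TL_mem m t : tsz t = m -> t \in TL m.
Proof.
move=> H; apply/mapP; exists [:: t] => //.
by apply: enumF_complete; rewrite /fsz /=; lia.
Qed.

Lemma TL_spec m t : t \in TL m -> tsz t = m.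
Proof.
case/mapP=> f /enumF_spec [s1 s2] ->.
by case: f s1 s2 => [|a [|? ?]] //= _; rewrite /fsz /=; lia.
Qed.

Lemma TL_uniq m : uniq (TL m).
Proof.
rewrite map_inj_in_uniq ?enumF_uniq // => f g /enumF_spec [s1 _] /enumF_spec [s2 _].
by case: f s1 => [|a [|? ?]] //= _; case: g s2 => [|b [|? ?]] //= _ ->.
Qed.

Lemma TL_size m : size (TL m) * (2 * m).+1 = 'C(3 * m, m).
Proof.
have H := @enumF_size (3 * m + 2) m 1 (ltac:(lia)).
rewrite size_map.
have H2 := mul_bin_down (3 * m).+1 m.
rewrite /= -addn1 in H2.
have E1 : (3 * m + 1 - m) = (2 * m).+1 by lia.
rewrite E1 in H2.
apply/eqP; rewrite -(eqn_pmul2l (_ : 0 < 3 * m + 1)) //; apply/eqP.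
rewrite mulnA [_ * size _]mulnC H H2 mul1n mulnC //.
lia.
Qed.

Lemma lvR_R0 n : lvR (R0 n) = iota 1 n.
Proof. rewrite /R0; elim: (iota 1 n) => //= i s IH. by rewrite lvR_cons IH. Qed.

Lemma good_R0 n : good (R0 n).
Proof. by rewrite /good lvR_R0 iota_uniq. Qed.

Lemma size_R0 n : size (R0 n) = n.
Proof. by rewrite /R0 size_map size_iota. Qed.

Lemma notin_R0 n u v : Nd u v \notin R0 n.
Proof. by apply/negP => /mapP [i _]. Qed.

Lemma fsetU_cancel (A X Y : {fset lab}) : A `|` X = A `|` Y ->
  (forall z, z \in X -> z \notin A) -> (forall z, z \in Y -> z \notin A) -> X = Y.
Proof.
move=> E hX hY; rewrite fsetUC [in RHS]fsetUC in E.
apply: (part_eq (p := fun z => z \notin A) E) => // z ->; done.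
Qed.

Lemma eval_notin n t : (tsz t).+1 = n -> forall z, z \in (eval t (R0 n)).1 -> z \notin fs (R0 n).
Proof.
move=> s z zin.
have [_ _ _ _ Li] := inv (good_R0 n) (etrans s (esym (size_R0 n))).
have [u [v [-> _ _ _]]] := Li z zin.
by rewrite in_fs notin_R0.
Qed.

Lemma classes_ok n : 0 < n ->
  let E := [fset x | x in [seq fs (R0 n) `|` (eval t (R0 n)).1 | t <- TL n.-1]] in
  endstate_classes n E /\ #|` E| = size (TL n.-1).
Proof.
move=> n1 E; split.
  move=> S; split.
    rewrite inE => /mapP [t tin ->].
    have st := TL_spec tin.
    have sz : (tsz t).+1 = size (R0 n) by rewrite size_R0; lia.
    have [N [r' [HM T EL]]] := Full_sound0 (eval_Full sz).
    exists (State r' (N ++ R0 n)); split.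
    - exact: (mstar_reach HM (reach_init n)).
    - by apply/endstate_term.
    - by change (fs (N ++ R0 n) = fs (R0 n) `|` (eval t (R0 n)).1); rewrite fs_cat EL fsetUC.
  move=> [s [Hr He Hl]].
  have [N [HM Hh]] := reach_mstar Hr.
  have T := (endstate_term s).1 He.
  have HE : Ends [:: R0 n] (fs N) by exists N, (regions s).
  have p0 : 0 < size (R0 n) by rewrite size_R0.
  have [y HF] := @complete (size (R0 n)) (R0 n) (fs N) (leqnn _) p0 HE.
  have [t [st Ev]] := Full_eval HF.
  rewrite inE; apply/mapP; exists t.
    by apply: TL_mem; rewrite size_R0 in st; lia.
  rewrite Ev /= -Hl /labels Hh.
  by change (fs (N ++ R0 n) = fs (R0 n) `|` fs N); rewrite fs_cat fsetUC.
rewrite card_fs ?size_map //.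
rewrite map_inj_in_uniq ?TL_uniq // => t t' tin tin' EF.
have st := TL_spec tin; have st' := TL_spec tin'.
have sz : (tsz t).+1 = n by lia.
have sz' : (tsz t').+1 = n by lia.
apply: (eval_inj (good_R0 n)); rewrite ?size_R0 //.
exact: (fsetU_cancel EF (eval_notin sz) (eval_notin sz')).
Qed.

Local Close Scope fset_scope.
Local Open Scope ring_scope.

Theorem theorem2 (n : nat) : (1 <= n)%N ->
  exists E : {fset {fset lab}},
    endstate_classes n E /\
    (#|` E|%:R : rat) = (1 / (2 * n - 1)%:R) * ('C(3 * n - 3, n - 1))%:R.
Proof.
move=> n1; have [H1 H2] := classes_ok n1.
eexists; split; first exact: H1.
rewrite H2; case: n n1 {H1 H2} => [//|m] _ /=.
have -> : (2 * m.+1 - 1)%N = (2 * m).+1 by lia.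
have -> : (3 * m.+1 - 3)%N = (3 * m)%N by lia.
rewrite subn1 /= -TL_size natrM mul1r mulrC mulfK //.
by rewrite pnatr_eq0.
Qed.
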